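(* Let $n\ge2$ and let $\tau=(\tau^1,\dots,\tau^n)$ be an $\mathbf R^n$-valued random variable taking exactly $n+1$ distinct values, each with positive probability, such that $\mathbf E[\tau^i]=0$ for $i=1,\dots,n$ and $\mathbf E[\tau^i\tau^j]=\delta_{ij}$ for $i,j=1,\dots,n$. Then there exists $(i,j,k)\in\{1,\dots,n\}^3$ with $\mathbf E[\tau^i\tau^j\tau^k]\ne0$. *)

(* Defs.v *)
(* A random vector tau in R^n taking finitely many values is
   described by its (discrete) law: the list of its distinct values
   v k (k : 'I_m) with their probabilities p k. *)
From mathcomp Require Import all_boot all_order all_algebra.
From mathcomp Require Import reals.
Set Implicit Arguments. Unset Strict Implicit. Unset Printing Implicit Defensive.
Import Order.TTheory GRing.Theory Num.Theory.
Local Open Scope ring_scope.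

Definition discrete_law (R : realType) (n m : nat)
  (v : 'I_m -> 'rV[R]_n) (p : 'I_m -> R) : Prop :=
  injective v /\ (forall k, 0 < p k) /\ \sum_(k < m) p k = 1.

Definition dexpect (R : realType) (n m : nat)
  (v : 'I_m -> 'rV[R]_n) (p : 'I_m -> R) (f : 'rV[R]_n -> R) : R :=
  \sum_(k < m) p k * f (v k).

(* Main.v *)
Require Import Defs.
From mathcomp Require Import all_boot all_order all_algebra.
From mathcomp Require Import reals.
From mathcomp Require Import ring lra.
From Stdlib Require Import Classical.
Import Order.TTheory GRing.Theory Num.Theory.
Local Open Scope ring_scope.

Lemma triple_sum (R : comRingType) n (F G H : 'I_n -> R) :
  (\sum_i F i) * (\sum_j G j) * (\sum_k H k) =
  \sum_i \sum_j \sum_k F i * G j * H k.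
Proof.
rewrite -mulrA big_distrl /=; apply eq_bigr => i _.
rewrite big_distrl big_distrr /=; apply eq_bigr => j _.
rewrite mulrA big_distrr /=; apply eq_bigr => k _.
by [].
Qed.

Lemma alg_half (R : realFieldType) (p t : R) :
  0 < p -> p * (1 + t) = 1 -> p * t ^+ 3 - (1 - p) = 0 -> 1 / 2 <= p.
Proof.
move=> pp h1 h2.
have e : p * (t * (t - 1) * (t + 1)) = p * t ^+ 3 - (1 - p) - (p * (1 + t) - 1).
  by ring.
rewrite h1 h2 subrr subr0 in e.
move/eqP: e; rewrite mulf_eq0 (gt_eqF pp) /= !mulf_eq0 subr_eq0 addr_eq0.
case/orP => [/orP [/eqP t0 | /eqP t1] | /eqP tm].
- rewrite t0 addr0 mulr1 in h1; rewrite h1; lra.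
- rewrite t1 in h1; lra.
- rewrite tm subrr mulr0 in h1; lra.
Qed.

Theorem lemma6p1 (R : realType) (n : nat) (hn : (2 <= n)%N)
  (v : 'I_n.+1 -> 'rV[R]_n) (p : 'I_n.+1 -> R) :
  discrete_law v p ->
  (forall i : 'I_n, dexpect v p (fun x => x ord0 i) = 0) ->
  (forall i j : 'I_n,
     dexpect v p (fun x => x ord0 i * x ord0 j) = (i == j)%:R) ->
  exists i j k : 'I_n,
    dexpect v p (fun x => x ord0 i * x ord0 j * x ord0 k) != 0.
Proof.
move=> [_ [pos sum1]] H1 H2.
apply: NNPP => Hne.
have H3 : forall i j k : 'I_n,
    dexpect v p (fun x => x ord0 i * x ord0 j * x ord0 k) = 0.
  move=> i j k; apply/eqP; apply/negPn/negP => hne; apply: Hne; by exists i, j, k.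
set w := fun k i => v k ord0 i.
pose B : 'M[R]_n.+1 := \matrix_(k, a) (if unlift ord0 a is Some i then w k i else 1).
pose C : 'M[R]_n.+1 := \matrix_(a, k) (p k * B k a).
have B0 : forall k, B k ord0 = 1 by move=> k; rewrite mxE unlift_none.
have BS : forall k i, B k (lift ord0 i) = w k i by move=> k i; rewrite mxE liftK.
have CB : C *m B = 1%:M.
  apply/matrixP => a b; rewrite !mxE.
  under eq_bigr => k _ do rewrite mxE.
  case: (unliftP ord0 a) => [i ->|->]; case: (unliftP ord0 b) => [j ->|->].
  - rewrite (inj_eq lift_inj) -H2 /dexpect. apply eq_bigr => k _.
    by rewrite !BS mulrA.
  - rewrite eq_sym (negbTE (neq_lift _ _)) /= -[RHS](H1 i) /dexpect.
    apply eq_bigr => k _; by rewrite BS B0 mulr1.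
  - rewrite (negbTE (neq_lift _ _)) /= -[RHS](H1 j) /dexpect.
    apply eq_bigr => k _; by rewrite BS B0 mulr1.
  - rewrite eqxx -sum1; apply eq_bigr => k _; by rewrite B0 !mulr1.
have BC := mulmx1C CB.
pose s k l := \sum_(i < n) w k i * w l i.
have HS : forall k l, p l * (1 + s k l) = (k == l)%:R.
  move=> k l; move/matrixP: BC => /(_ k l); rewrite !mxE => <-.
  rewrite big_ord_recl B0 mxE B0 mul1r mulr1 mulrDr; congr (_ + _).
    by rewrite mulr1.
  rewrite /s /= mulr_sumr; apply eq_bigr => i _; rewrite BS mxE BS /w; ring.
have cub : forall l, \sum_q p q * s q l ^+ 3 = 0.
  move=> l.
  transitivity (\sum_(i < n) \sum_(j < n) \sum_(k < n)
     (w l i * w l j * w l k) * dexpect v p (fun x => x ord0 i * x ord0 j * x ord0 k)); last first.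
    rewrite big1 // => i _; rewrite big1 // => j _; rewrite big1 // => k _; by rewrite H3 mulr0.
  rewrite /dexpect.
  under [RHS]eq_bigr do under eq_bigr do under eq_bigr do rewrite mulr_sumr.
  under [RHS]eq_bigr do under eq_bigr do rewrite exchange_big.
  under [RHS]eq_bigr do rewrite exchange_big.
  rewrite [RHS]exchange_big /=; apply eq_bigr => q _.
  have -> : s q l ^+ 3 = s q l * s q l * s q l by rewrite exprS expr2 mulrA.
  rewrite /s triple_sum mulr_sumr; apply eq_bigr => i _.
  rewrite mulr_sumr; apply eq_bigr => j _.
  rewrite mulr_sumr; apply eq_bigr => k _.
  rewrite /w; ring.
have half : forall l, 1 / 2 <= p l.
  move=> l; apply: (@alg_half _ (p l) (s l l) (pos l)).
    by rewrite HS eqxx.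
  have := cub l; rewrite (bigD1 l) //= => <-.
  have -> : \sum_(q | q != l) p q * s q l ^+ 3 = - \sum_(q | q != l) p q.
    rewrite -sumrN; apply eq_bigr => q ql.
    have e := HS q l; rewrite (negbTE ql) in e.
    have : 1 + s q l = 0.
      by move/eqP: e; rewrite mulf_eq0 (gt_eqF (pos l)) => /eqP.
    move/eqP; rewrite addrC addr_eq0 => /eqP ->.
    by rewrite exprS expr2 !mulNr !mul1r opprK mulrN mulr1.
  have : \sum_q p q = p l + \sum_(q | q != l) p q by rewrite (bigD1 l).
  rewrite sum1 => ->; ring.
have : \sum_(k < n.+1) (1 / 2 : R) <= \sum_(k < n.+1) p k.
  by apply: ler_sum => k _; apply: half.
rewrite sum1 sumr_const card_ord -mulr_natr.
have : (3 : R) <= n.+1%:R by rewrite ler_nat.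
lra.
Qed.
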